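(* Let $m \geqslant 2$ and $r \geqslant 4$, and let $\mathcal{A}$ be a multi-family of subsets of $[m]$. If $\mathcal{A}$ is a double cover of $[m]$ and $|\mathcal{A}| \leqslant r$, then $$\left|\Big\{\{A,B\} \in \binom{\mathcal{A}}{2} : A \cap B \neq \emptyset\Big\}\right| \,\leqslant\, \lambda(r)\left(\sum_{A \in \mathcal{A}} |A| - 2m\right) + m.$$
   Context: $\lambda(r) = \frac{\binom{r}{2}-2}{r-2}$. A multi-family $\mathcal{A}$ is a double cover of $X$ if every element of $X$ lies in at least two members of $\mathcal{A}$ (counted with multiplicity). $\binom{\mathcal{A}}{2}$ denotes the unordered pairs of distinct members of the multi-family (members with equal underlying sets count as distinct), and $|\mathcal{A}|$ and the sum count members with multiplicity. *)

(* Defs.v *)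
From mathcomp Require Import all_boot all_order all_algebra.
Set Implicit Arguments. Unset Strict Implicit. Unset Printing Implicit Defensive.
Import GRing.Theory Num.Theory.
Local Open Scope ring_scope.

Definition lambda (r : nat) : rat := (('C(r, 2))%:R - 2) / (r%:R - 2).

(* A multi-family of subsets of [m] is a sequence of sets (multiplicity = repetition).
   Double cover: every element lies in at least two members (with multiplicity). *)
Definition double_cover (m : nat) (A : seq {set 'I_m}) : Prop :=
  forall x : 'I_m, (2 <= count (fun S : {set 'I_m} => x \in S) A)%N.

Definition n_intersecting_pairs (m : nat) (A : seq {set 'I_m}) : nat :=
  #|[set p : 'I_(size A) * 'I_(size A) |
      (p.1 < p.2)%N && (nth set0 A p.1 :&: nth set0 A p.2 != set0)]|.

Definition total_size (m : nat) (A : seq {set 'I_m}) : nat :=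
  (\sum_(S <- A) #|S|)%N.

(* Main.v *)
Require Import Defs.
From mathcomp Require Import all_boot all_order all_algebra.
From mathcomp Require Import zify ring lra.
Import Order.TTheory GRing.Theory Num.Theory.

Lemma count_nth_sum (T : Type) (x0 : T) (a : pred T) (s : seq T) :
  count a s = \sum_(i < size s) a (nth x0 s i).
Proof.
elim: s => [|y s IH]; first by rewrite big_ord0.
by rewrite /= big_ord_recl /= IH.
Qed.

Lemma card_set_sum (T : finType) (P : pred T) :
  #|[set i | P i]| = \sum_i (P i : nat).
Proof.
rewrite -sum1_card big_mkcond /=; apply: eq_bigr => i _.
by rewrite inE; case: (P i).
Qed.

Lemma card_bigcup_le (I T : finType) (F : I -> {set T}) :
  #|\bigcup_i F i| <= \sum_i #|F i|.
Proof.
elim/big_ind2 : _ => // [|m B n C Am Bn]; first by rewrite cards0.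
by rewrite (leq_trans (leq_card_setU _ _))// leq_add.
Qed.

Lemma card_pairs n (D : {set 'I_n}) :
  #|[set p : 'I_n * 'I_n | (p.1 < p.2) && (p.1 \in D) && (p.2 \in D)]| <= 'C(#|D|, 2).
Proof.
set P := [set _ | _].
pose f (p : 'I_n * 'I_n) := [set p.1; p.2].
rewrite -(@card_in_imset _ _ f P); last first.
  move=> [a b] [c d]; rewrite !inE /= => /andP[/andP[ab _] _] /andP[/andP[cd _] _]; rewrite /f /= => e.
  have ha : a \in [set c; d] by rewrite -e !inE eqxx.
  have hb : b \in [set c; d] by rewrite -e !inE eqxx orbT.
  have hc : c \in [set a; b] by rewrite e !inE eqxx.
  move: ha hb hc; rewrite !inE => /orP[] /eqP ha /orP[] /eqP hb /orP[] /eqP hc;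
   subst => //; lia.
rewrite -cards_draws; apply: subset_leq_card; apply/subsetP => B /imsetP[[a b]].
rewrite inE /= => /andP[/andP[ab aD] bD] ->; rewrite inE /f.
apply/andP; split.
  by apply/subsetP => z; rewrite !inE => /orP[] /eqP ->.
by rewrite cards2 neq_ltn ab.
Qed.

Local Open Scope ring_scope.

Lemma bin2_rat (d : nat) : ('C(d, 2))%:R * 2 = (d%:R : rat) * (d%:R - 1).
Proof.
have := bin_ffact d 2. rewrite /= ffactnS ffactn1 => h.
case: d h => [|d] h; first by rewrite bin_small // mul0r.
rewrite -natrM h natrM /= -addn1 natrD addrK //.
Qed.

Lemma lambda_ge0 r : (4 <= r)%N -> 0 <= lambda r.
Proof.
move=> hr; rewrite /lambda; apply: divr_ge0.
  rewrite subr_ge0; have := bin2_rat r; have hr' : (4%:R <= r%:R :> rat) by rewrite ler_nat.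
  move=> h. have : (2 * 2 : rat) <= 'C(r,2)%:R * 2 by rewrite h; nra.
  nra.
rewrite subr_ge0; have : (4%:R <= r%:R :> rat) by rewrite ler_nat. lra.
Qed.

Lemma lambda_mul r : (4 <= r)%N -> lambda r * (r%:R - 2) = ('C(r, 2))%:R - 2.
Proof.
move=> hr; rewrite /lambda mulrVK //; rewrite unitfE subr_eq0.
have : (4%:R <= r%:R :> rat) by rewrite ler_nat.
move=> h; apply/eqP => e; rewrite e in h; lra.
Qed.

Lemma key_ineq r d : (4 <= r)%N -> (2 <= d)%N -> (d < r)%N ->
  ('C(d, 2))%:R <= lambda r * (d%:R - 2) + 1 :> rat.
Proof.
move=> hr hd hdr.
have ha : (2%:R <= d%:R :> rat) by rewrite ler_nat.
have hb : (4%:R <= r%:R :> rat) by rewrite ler_nat.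
have hab : (d%:R + 1 <= r%:R :> rat) by rewrite natr1 ler_nat.
have c1 := bin2_rat d; have c2 := bin2_rat r.
rewrite /lambda mulrAC -lerBlDr ler_pdivlMr; last lra.
set a := (d%:R : rat) in ha hab c1 *; set b := (r%:R : rat) in hb hab c2 *.
set c := ('C(d,2))%:R : rat in c1 *; set cr := ('C(r,2))%:R : rat in c2 *.
have h1 : 0 <= (a - 2) * (b - 1 - a) * (b - 2) by apply: mulr_ge0; [apply: mulr_ge0|]; lra.
have h2 : 0 <= (a - 2) * (b - 4) by apply: mulr_ge0; lra.
nra.
Qed.

Lemma total_size_count m (s : seq {set 'I_m}) :
  total_size s = (\sum_x count (fun S : {set 'I_m} => x \in S) s)%N.
Proof.
rewrite /total_size; elim: s => [|S s IH]; first by rewrite big_nil big1.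
rewrite big_cons IH /=.
rewrite big_split /=; congr (_ + _)%N.
by rewrite -card_set_sum; apply: eq_card => x; rewrite inE.
Qed.

Theorem lemma3p5 (m r : nat) (A : seq {set 'I_m}) :
  (2 <= m)%N -> (4 <= r)%N ->
  double_cover A -> (size A <= r)%N ->
  ((n_intersecting_pairs A)%:R : rat)
    <= lambda r * ((total_size A)%:R - (2 * m)%N%:R) + m%:R.
Proof.
move=> hm hr hdc hsz.
set n := size A.
pose d x := count (fun S : {set 'I_m} => x \in S) A.
pose D (x : 'I_m) : {set 'I_n} := [set i : 'I_n | x \in nth set0 A i].
have cardD x : #|D x| = d x.
  by rewrite card_set_sum /d (@count_nth_sum _ set0).
pose P (x : 'I_m) := [set p : 'I_n * 'I_n | (p.1 < p.2)%N && (p.1 \in D x) && (p.2 \in D x)].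
pose F (x : 'I_m) := lambda r * ((d x)%:R - 2) + 1.
have RHS : lambda r * ((total_size A)%:R - (2 * m)%N%:R) + m%:R = \sum_x F x.
  rewrite big_split /= sumr_const card_ord -mulr_sumr sumrB sumr_const card_ord.
  by rewrite total_size_count natr_sum natrM mulr_natr.
rewrite RHS /n_intersecting_pairs.
set I := [set _ | _].
have Isub : I \subset \bigcup_x P x.
  apply/subsetP => p; rewrite inE => /andP[lt /set0Pn[x]]; rewrite inE => /andP[h1 h2].
  by apply/bigcupP; exists x => //; rewrite !inE lt h1 h2.
have dle x : (d x <= r)%N by rewrite /d (leq_trans (count_size _ _)).
case: (pickP (fun x : 'I_m => (r <= d x)%N)) => [x0 hx0 | hall].
  have dx0 : d x0 = r by apply/eqP; rewrite eqn_leq dle hx0.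
  have DT : D x0 = setT.
    apply/eqP; rewrite eqEcard subsetT cardsT card_ord cardD dx0 //.
  have : (#|I| <= 'C(r, 2))%N.
    rewrite -dx0 -cardD.
    have hp := @card_pairs _ (D x0).
    have hs : I \subset P x0.
      by apply/subsetP => p; rewrite /P DT !inE andbT; case/andP => ->.
    exact: leq_trans (subset_leq_card hs) hp.
  rewrite -(ler_nat rat) => hI; apply: le_trans hI _.
  rewrite (bigD1 x0) //=.
  have h1 : ('C(r, 2))%:R - 1 <= F x0 :> rat.
    rewrite /F dx0 lambda_mul //; lra.
  have h2 : 1 <= \sum_(i | i != x0) F i.
    have [x1 hx1] : exists x1 : 'I_m, x1 != x0.
      have h0 : (0 < m)%N by lia.
      case: (eqVneq (Ordinal h0) x0) => [e|ne]; last by exists (Ordinal h0).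
      by exists (Ordinal hm); rewrite -e -(inj_eq val_inj).
    rewrite (bigD1 x1) //=.
    have hF : forall x, 0 <= F x - 1.
      move=> x; rewrite /F addrK; apply: mulr_ge0; first exact: lambda_ge0.
      by rewrite subr_ge0 (ler_nat rat 2); exact: hdc.
    have := hF x1; have : 0 <= \sum_(i | (i != x0) && (i != x1)) F i.
      by apply: sumr_ge0 => i _; have := hF i; lra.
    lra.
  lra.
have : (#|I| <= \sum_x 'C(d x, 2))%N.
  apply: leq_trans (subset_leq_card Isub) _.
  apply: leq_trans (card_bigcup_le _ _ _) _.
  by apply: leq_sum => x _; rewrite -cardD; apply: (@card_pairs _ (D x)).
rewrite -(ler_nat rat) natr_sum => hI; apply: le_trans hI _.
apply: ler_sum => x _; apply: key_ineq => //; first exact: hdc.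
by have := hall x; rewrite /= ltnNge => ->.
Qed.
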